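(* Let $\theta\in\mathbb{R}^{m\times n}$ and $\overline\theta = \frac{1}{mn}\sum_{i=1}^m\sum_{j=1}^n\theta[i,j]$. Then $$\sum_{i=1}^m\sum_{j=1}^n(\theta[i,j]-\overline\theta)^2 \leq \Big(5 + \frac{4mn}{\min(n^2,m^2)}\Big)\mathrm{TV}(\theta)^2.$$ In particular, when $m=n$, $\sum_{i=1}^n\sum_{j=1}^n(\theta[i,j]-\overline\theta)^2 \le 9\,\mathrm{TV}(\theta)^2$.
   Context: For $\theta\in\mathbb{R}^{m\times n}$, $\mathrm{TV}(\theta) = \sum_{i\in[m]}\sum_{j\in[n-1]}|\theta[i,j+1]-\theta[i,j]| + \sum_{i\in[m-1]}\sum_{j\in[n]}|\theta[i+1,j]-\theta[i,j]|$ (unnormalized total variation over the edges of the $m\times n$ grid graph). *)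

(* Defs.v *)
From mathcomp Require Import all_boot all_order all_algebra.
Set Implicit Arguments. Unset Strict Implicit. Unset Printing Implicit Defensive.
Import Order.TTheory GRing.Theory Num.Theory.
Local Open Scope ring_scope.

(* Unnormalized total variation of theta over the edges of the m x n grid graph:
   horizontal edges (i,j)-(i,j+1) and vertical edges (i,j)-(i+1,j). *)
Definition TV (R : numDomainType) (m n : nat) (theta : 'M[R]_(m, n)) : R :=
  \sum_(i < m) \sum_(j < n) \sum_(j' < n | j' == j.+1 :> nat)
      `|theta i j' - theta i j|
  + \sum_(i < m) \sum_(i' < m | i' == i.+1 :> nat) \sum_(j < n)
      `|theta i' j - theta i j|.

Definition mean (R : numFieldType) (m n : nat) (theta : 'M[R]_(m, n)) : R :=
  (\sum_(i < m) \sum_(j < n) theta i j) / (m * n)%:R.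

(* Main.v *)
Require Import Defs.
From mathcomp Require Import all_boot all_order all_algebra.
From mathcomp Require Import ring lra zify.
Import Order.TTheory GRing.Theory Num.Theory.
Set Implicit Arguments. Unset Strict Implicit.
Local Open Scope ring_scope.

Section Aux.
Variable R : realFieldType.

Definition Dv n (g : 'I_n -> R) :=
  \sum_(j < n) \sum_(j' < n | j' == j.+1 :> nat) `|g j' - g j|.

Lemma Dv_ge0 n (g : 'I_n -> R) : 0 <= Dv g.
Proof. by apply: sumr_ge0 => j _; apply: sumr_ge0 => *; exact: normr_ge0. Qed.

Lemma path_le n (g : 'I_n -> R) (a : 'I_n) : forall k (hk : (k < n)%N), (a <= k)%N ->
  `|g a - g (Ordinal hk)| <= \sum_(j < n | (a <= j < k)%N)
        \sum_(j' < n | j' == j.+1 :> nat) `|g j' - g j|.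
Proof.
have H0 : forall P : pred 'I_n, 0 <= \sum_(j < n | P j)
        \sum_(j' < n | j' == j.+1 :> nat) `|g j' - g j|.
  by move=> P; apply: sumr_ge0 => j _; apply: sumr_ge0 => *; exact: normr_ge0.
elim=> [|k IH] hk hak.
  have e: a = Ordinal hk by apply: val_inj => /=; move: hak; rewrite leqn0 => /eqP.
  by rewrite -e subrr normr0.
have [hak0|hgt|e] := ltngtP a k.+1.
2: by move: hgt; rewrite ltnNge hak.
2: have e': a = Ordinal hk by apply: val_inj.
2: by rewrite -e' subrr normr0.
have hak' : (a <= k)%N by move: hak0; rewrite ltnS.
have hk' : (k < n)%N by exact: ltnW.
have := IH hk' hak' => IH'.
rewrite (bigD1 (Ordinal hk')) /=; last by rewrite hak' ltnSn.
rewrite (big_pred1 (Ordinal hk)) /=; last by move=> j; rewrite /= -val_eqE.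
rewrite (eq_bigl (fun j : 'I_n => (a <= j < k)%N)); last first.
  move=> j /=; rewrite -val_eqE /= ltnS; case: (ltngtP j k) => h;
  by rewrite ?andbT ?andbF.
apply: le_trans (ler_distD (g (Ordinal hk')) _ _) _.
by rewrite addrC lerD // distrC.
Qed.

Lemma path_bound n (g : 'I_n -> R) (a b : 'I_n) : `|g a - g b| <= Dv g.
Proof.
wlog hab : a b / (a <= b)%N.
  move=> W; case: (leqP a b) => h; first exact: W.
  by rewrite distrC; apply: W; exact: ltnW.
have := @path_le n g a b (ltn_ord b) hab.
have -> : Ordinal (ltn_ord b) = b by apply: val_inj.
move=> h; apply: le_trans h _.
rewrite /Dv [X in _ <= X](bigID (fun j : 'I_n => (a <= j < b)%N)) /= lerDl.
by apply: sumr_ge0 => j _; apply: sumr_ge0 => *; exact: normr_ge0.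
Qed.

End Aux.

Section Var.
Variable R : realFieldType.
Variable T : finType.
Variable x : T -> R.

Lemma sum_quad a b c : \sum_p (a * x p ^+ 2 + b * x p + c)
  = a * (\sum_p x p ^+ 2) + b * (\sum_p x p) + c * #|T|%:R.
Proof. by rewrite !big_split /= -!mulr_sumr sumr_const mulr_natr. Qed.

Lemma var_pairs : (0 < #|T|)%N ->
  2 * #|T|%:R * \sum_p (x p - (\sum_q x q) / #|T|%:R) ^+ 2
  = \sum_p \sum_q (x p - x q) ^+ 2.
Proof.
move=> hT; set N : R := #|T|%:R; set s1 := \sum_q x q; set s2 := \sum_q x q ^+ 2.
have hN : N != 0 by rewrite pnatr_eq0 -lt0n.
transitivity (\sum_p (N * x p ^+ 2 + (-2 * s1) * x p + s2)).
  rewrite (eq_bigr (fun p => 1 * x p ^+ 2 + (- 2 * (s1 / N)) * x p + (s1/N)^+2));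
    last by move=> p _; ring.
  rewrite !sum_quad -/s1 -/s2 -/N; field; exact: hN.
apply: eq_bigr => p _.
rewrite (eq_bigr (fun q => 1 * x q ^+ 2 + (- 2 * x p) * x q + x p ^+ 2));
  last by move=> q _; ring.
rewrite sum_quad -/s1 -/s2 -/N; ring.
Qed.
End Var.

Lemma regroup (R : realFieldType) (I J K : finType) (F : I -> J -> K -> R) :
  \sum_i \sum_j \sum_k F i j k = \sum_k \sum_i \sum_j F i j k.
Proof.
under eq_bigr => i _ do rewrite exchange_big. by rewrite exchange_big.
Qed.

Section Main.
Variable R : realFieldType.
Variables m n : nat.
Variable theta : 'M[R]_(m, n).

Definition Hr (i : 'I_m) := Dv (fun j => theta i j).
Definition Vc (l : 'I_n) := Dv (fun i => theta i l).

Lemma TV_split : TV theta = \sum_i Hr i + \sum_l Vc l.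
Proof.
rewrite /TV /Hr /Vc /Dv; congr (_ + _).
symmetry; rewrite exchange_big /=; apply: eq_bigr => i _.
by rewrite exchange_big.
Qed.

Lemma bound4 i j k l :
  (theta i j - theta k l) ^+ 2 <= (Hr i + Vc l) * (Vc j + Hr k).
Proof.
rewrite -real_normK ?num_real // expr2.
apply: ler_pM; rewrite ?normr_ge0 //.
  apply: le_trans (ler_distD (theta i l) _ _) _.
  apply: lerD; first exact: (path_bound (fun j => theta i j)).
  exact: (path_bound (fun i => theta i l)).
apply: le_trans (ler_distD (theta k j) _ _) _.
apply: lerD; first exact: (path_bound (fun i => theta i j)).
exact: (path_bound (fun j => theta k j)).
Qed.

Lemma main_ineq (hm : (0 < m)%N) (hn : (0 < n)%N) :
  2 * (m * n)%:R * \sum_(i < m) \sum_(j < n) (theta i j - mean theta) ^+ 2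
  <= ((n + m)%:R * TV theta) ^+ 2.
Proof.
set x := fun p : 'I_m * 'I_n => theta p.1 p.2.
have cT : #|{: 'I_m * 'I_n}| = (m * n)%N by rewrite card_prod !card_ord.
have -> : \sum_(i < m) \sum_(j < n) (theta i j - mean theta) ^+ 2
   = \sum_p (x p - (\sum_q x q) / #|{: 'I_m * 'I_n}|%:R) ^+ 2.
  rewrite pair_big /= /mean cT; apply: eq_bigr => p _.
  by rewrite pair_big.
rewrite -cT var_pairs; last by rewrite cT muln_gt0 hm.
apply: le_trans (_ : \sum_p \sum_q ((Hr p.1 + Vc q.2) * (Vc p.2 + Hr q.1)) <= _).
  by apply: ler_sum => p _; apply: ler_sum => q _; exact: bound4.
set H := \sum_i Hr i; set V := \sum_l Vc l.
have E : \sum_p \sum_q ((Hr p.1 + Vc q.2) * (Vc p.2 + Hr q.1))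
   = (\sum_i \sum_l (Hr i + Vc l)) * (\sum_j \sum_k (Vc j + Hr k)).
  transitivity (\sum_i \sum_j \sum_k \sum_l ((Hr i + Vc l) * (Vc j + Hr k))).
    symmetry; under eq_bigr => i _ do under eq_bigr => j _ do rewrite pair_big.
    by rewrite pair_big.
  rewrite mulr_suml; apply: eq_bigr => i _.
  rewrite mulr_suml regroup; apply: eq_bigr => l _.
  rewrite mulr_sumr; apply: eq_bigr => j _.
  by rewrite mulr_sumr.
have E1 : \sum_i \sum_l (Hr i + Vc l) = H *+ n + V *+ m.
  under eq_bigr => i _ do rewrite big_split /= sumr_const card_ord.
  by rewrite big_split /= sumrMnl sumr_const card_ord.
have E2 : \sum_j \sum_k (Vc j + Hr k) = V *+ m + H *+ n.
  under eq_bigr => i _ do rewrite big_split /= sumr_const card_ord.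
  by rewrite big_split /= sumrMnl sumr_const card_ord.
rewrite E E1 E2 TV_split -/H -/V.
have H0 : 0 <= H by apply: sumr_ge0 => i _; exact: Dv_ge0.
have V0 : 0 <= V by apply: sumr_ge0 => i _; exact: Dv_ge0.
rewrite -[H *+ n]mulr_natr -[V *+ m]mulr_natr natrD.
have n0 : 0 <= (n%:R : R) by exact: ler0n.
have m0 : 0 <= (m%:R : R) by exact: ler0n.
have A0 : 0 <= H * n%:R + V * m%:R by rewrite addr_ge0 // mulr_ge0.
have A1 : H * n%:R + V * m%:R <= (n%:R + m%:R) * (H + V).
  have -> : (n%:R + m%:R) * (H + V) = H * n%:R + V * m%:R + (n%:R * V + m%:R * H)
    by ring.
  by rewrite lerDl addr_ge0 // mulr_ge0.
by rewrite [V * _ + _]addrC expr2; apply: ler_pM.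
Qed.
End Main.
Unset Implicit Arguments.

Theorem proposition4p3 (R : realFieldType) (m n : nat)
  (hm : (0 < m)%N) (hn : (0 < n)%N) (theta : 'M[R]_(m, n)) :
  \sum_(i < m) \sum_(j < n) (theta i j - mean theta) ^+ 2
    <= (5 + 4 * (m * n)%:R / (minn (n ^ 2) (m ^ 2))%:R) * TV theta ^+ 2
  /\ (m = n ->
      \sum_(i < m) \sum_(j < n) (theta i j - mean theta) ^+ 2
        <= 9 * TV theta ^+ 2).
Proof.
have hmain := main_ineq theta hm hn.
set S := \sum_(i < m) \sum_(j < n) _ in hmain *.
set T := TV theta in hmain *.
have hN : (0 : R) < (m * n)%:R by rewrite ltr0n muln_gt0 hm.
have h2N : (0 : R) < 2 * (m * n)%:R by rewrite mulr_gt0.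
rewrite exprMn in hmain.
split; last first.
  move=> e; subst m.
  have e4 : ((n + n)%:R ^+ 2 : R) = 4 * (n * n)%:R.
    by rewrite -natrX -(natrM R 4); congr (_%:R); lia.
  rewrite e4 in hmain.
  rewrite -(ler_pM2l h2N); apply: le_trans hmain _.
  have T0 : 0 <= T ^+ 2 by exact: sqr_ge0.
  rewrite mulrA; apply: ler_wpM2r => //; lra.
have hMn : (0 < minn (n ^ 2) (m ^ 2))%N by rewrite leq_min !expn_gt0 hm hn.
have hnat : ((n + m) ^ 2 * minn (n ^ 2) (m ^ 2)
     <= 10 * (m * n) * minn (n ^ 2) (m ^ 2) + 8 * (m * n) ^ 2)%N.
  have h1 := geq_minl (n ^ 2) (m ^ 2); have h2 := geq_minr (n ^ 2) (m ^ 2).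
  move: (minn (n ^ 2) (m ^ 2)) h1 h2 => M h1 h2.
  have a1 : (n ^ 2 * M <= n ^ 2 * m ^ 2)%N by rewrite leq_mul2l h2 orbT.
  have a2 : (m ^ 2 * M <= m ^ 2 * n ^ 2)%N by rewrite leq_mul2l h1 orbT.
  nia.
set M := minn (n ^ 2) (m ^ 2) in hMn hnat *.
have hM : (0 : R) < M%:R by rewrite ltr0n.
have hP : ((n + m)%:R ^+ 2 : R) <= 2 * (m * n)%:R * (5 + 4 * (m * n)%:R / M%:R).
  rewrite -(ler_pM2r hM).
  have -> : 2 * (m * n)%:R * (5 + 4 * (m * n)%:R / M%:R) * M%:R
      = 10 * (m * n)%:R * M%:R + 8 * (m * n)%:R ^+ 2 :> R.
    by field; rewrite gt_eqF.
  rewrite -natrX -natrM -!(natrM R) -natrX -(natrM R 8) -natrD ler_nat //.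
rewrite -(ler_pM2l h2N); apply: le_trans hmain _.
have T0 : 0 <= T ^+ 2 by exact: sqr_ge0.
by rewrite [X in _ <= X]mulrA; apply: ler_wpM2r.
Qed.
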